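(* Let $N$ denote the smallest $k\ge 1$ such that $w_1$ and $w_{k+1}$ belong to the same class. Then for each $1\le i\le M$, $$E\left(h_{N-1}\mid w_1\in C_i\right)=-\log(p_i),$$ and consequently $\hat H_2=h_{N-1}$ is an unbiased estimator of the Shannon entropy: $$E(h_{N-1})=-\sum_{i=1}^M p_i\log(p_i).$$
   Context: Let $w_1,w_2,\dots$ be an infinite sequence of independent, identically distributed samples. Each sample belongs to exactly one of $M$ classes $C_1,\dots,C_M$, and $\Pr(w_k\in C_i)=p_i$, where $0<p_i\le 1$ and $\sum_{i=1}^M p_i=1$. The logarithm is the natural logarithm. The harmonic numbers are $h_n=\sum_{k=1}^n 1/k$ for $n\ge 1$, with $h_0=0$. *)

(* Defs.v *)
From Stdlib Require Import Reals List Arith.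
Import ListNotations.
Open Scope R_scope.

(* Classes C_1..C_M are encoded as natural numbers 0..M-1; a sample path
   w_1, w_2, ... is encoded as a function w : nat -> nat with w_{j+1} = w j. *)

Definition harmonic (n : nat) : R :=
  fold_right (fun k acc => / INR k + acc) 0 (seq 1 n).

Fixpoint words (M n : nat) : list (list nat) :=
  match n with
  | O => [nil]
  | S n' => flat_map (fun c => map (cons c) (words M n')) (seq 0 M)
  end.

Definition word_prob (p : nat -> R) (w : list nat) : R :=
  fold_right (fun c acc => p c * acc) 1 w.

(* Probability, under the i.i.d. law, of an event E on sample paths that depends
   only on the first n samples (a cylinder event): sum over all prefixes. *)
Definition Pr_cyl (M : nat) (p : nat -> R) (n : nat) (E : (nat -> nat) -> bool) : R :=
  fold_right Rplus 0
    (map (fun w => if E (fun j => nth j w 0%nat) then word_prob p w else 0) (words M n)).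

(* The event {N = k}: k is the smallest k >= 1 with w_{k+1} in the class of w_1,
   i.e. (0-indexed) w k = w 0 and w j <> w 0 for 1 <= j < k.
   It depends only on the first k+1 samples. *)
Definition N_eq (k : nat) (w : nat -> nat) : bool :=
  (1 <=? k)%nat && Nat.eqb (w k) (w 0%nat)
  && forallb (fun j => negb (Nat.eqb (w j) (w 0%nat))) (seq 1 (k - 1)).

Definition N_eq_cls (k i : nat) (w : nat -> nat) : bool :=
  N_eq k w && Nat.eqb (w 0%nat) i.

Definition sumM (M : nat) (f : nat -> R) : R :=
  fold_right (fun i acc => f i + acc) 0 (seq 0 M).

(* Main.v *)
Require Import Defs.
From Stdlib Require Import Reals List Arith Lra Lia Bool.
From Coquelicot Require Import Coquelicot.
Import ListNotations.
Open Scope bool_scope.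
Open Scope R_scope.
Definition L {A} (l : list A) (f : A -> R) : R := fold_right Rplus 0 (map f l).

Lemma L_app {A} (l1 l2 : list A) f : L (l1 ++ l2) f = L l1 f + L l2 f.
Proof. unfold L; induction l1; simpl; [lra|rewrite IHl1; lra]. Qed.

Lemma L_flat_map {A B} (g : A -> list B) l f :
  L (flat_map g l) f = L l (fun a => L (g a) f).
Proof. induction l; simpl; [reflexivity|]. rewrite L_app, IHl. reflexivity. Qed.

Lemma L_map {A B} (g : A -> B) l f : L (map g l) f = L l (fun a => f (g a)).
Proof. unfold L; now rewrite map_map. Qed.

Lemma L_ext_in {A} (l : list A) f g : (forall x, In x l -> f x = g x) -> L l f = L l g.
Proof. intros H; unfold L; now rewrite (map_ext_in _ _ _ H). Qed.

Lemma L_scal {A} (l : list A) a f : L l (fun x => a * f x) = a * L l f.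
Proof. unfold L; induction l; simpl; [lra|rewrite IHl; lra]. Qed.

Lemma L_plus {A} (l : list A) f g : L l (fun x => f x + g x) = L l f + L l g.
Proof. unfold L; induction l; simpl; [lra|rewrite IHl; lra]. Qed.

Lemma sumM_L M f : sumM M f = L (seq 0 M) f.
Proof. unfold sumM, L. induction (seq 0 M); simpl; congruence. Qed.

Lemma L_cons {A} (a : A) l f : L (a :: l) f = f a + L l f.
Proof. reflexivity. Qed.

Lemma L_delta (f : nat -> R) n s i : (s <= i < s + n)%nat ->
  L (seq s n) (fun c => if Nat.eqb c i then f c else 0) = f i.
Proof.
  revert s; induction n; intros s H; [lia|]. rewrite <- cons_seq, L_cons.
  destruct (Nat.eqb_spec s i).
  - subst. rewrite (L_ext_in _ _ (fun _ => 0)).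
    + unfold L. clear. induction (seq (S i) n); simpl; lra.
    + intros x Hx. apply in_seq in Hx. destruct (Nat.eqb_spec x i); [lia|auto].
  - rewrite IHn; [lra|lia].
Qed.

Lemma words_S M n F : L (words M (S n)) F = L (seq 0 M) (fun c => L (words M n) (fun w => F (c :: w))).
Proof. simpl. rewrite L_flat_map. apply L_ext_in; intros. now rewrite L_map. Qed.

Definition T (n i : nat) (w : list nat) : bool :=
  forallb (fun j => negb (Nat.eqb (nth j w 0%nat) i)) (seq 0 n) && Nat.eqb (nth n w 0%nat) i.

Lemma forallb_map_S (f : nat -> bool) l : forallb f (map S l) = forallb (fun j => f (S j)) l.
Proof. induction l; simpl; congruence. Qed.

Lemma T_S n i c rest : T (S n) i (c :: rest) = negb (Nat.eqb c i) && T n i rest.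
Proof.
  unfold T. rewrite <- cons_seq. simpl forallb. rewrite <- seq_shift, forallb_map_S.
  simpl. now rewrite andb_assoc.
Qed.

Lemma T_0 i c rest : T 0 i (c :: rest) = Nat.eqb c i.
Proof. reflexivity. Qed.

Lemma ev_cls m i c rest :
  N_eq_cls (S m) i (fun j => nth j (c :: rest) 0%nat) = Nat.eqb c i && T m i rest.
Proof.
  unfold N_eq_cls, N_eq, T. simpl. replace (m - 0)%nat with m by lia.
  rewrite <- seq_shift, forallb_map_S. simpl.
  destruct (Nat.eqb_spec c i); simpl.
  - subst. destruct (Nat.eqb (nth m rest 0%nat) i); simpl; [|now rewrite andb_false_r].
    now rewrite andb_true_r.
  - now rewrite !andb_false_r.
Qed.

Lemma ev_N m c rest :
  N_eq (S m) (fun j => nth j (c :: rest) 0%nat) = T m c rest.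
Proof.
  unfold N_eq, T. simpl. replace (m - 0)%nat with m by lia.
  rewrite <- seq_shift, forallb_map_S. simpl. apply andb_comm.
Qed.

Section G.
Variable M : nat.
Variable p : nat -> R.
Hypothesis hsum : sumM M p = 1.

Lemma G n i : (i < M)%nat ->
  L (words M (S n)) (fun w => if T n i w then word_prob p w else 0) = (1 - p i)^n * p i.
Proof.
  intros Hi. induction n.
  - rewrite words_S. simpl words.
    rewrite (L_ext_in _ _ (fun c => if Nat.eqb c i then p c else 0)).
    + rewrite L_delta; [lra|lia].
    + intros c _. rewrite L_cons. unfold L; simpl. rewrite T_0.
      destruct (Nat.eqb c i); simpl; lra.
  - rewrite words_S.
    rewrite (L_ext_in _ _ (fun c => (if Nat.eqb c i then 0 else p c) *
         L (words M (S n)) (fun w => if T n i w then word_prob p w else 0))).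
    + rewrite IHn.
      assert (E : L (seq 0 M) (fun c => (if Nat.eqb c i then 0 else p c) * ((1 - p i) ^ n * p i))
              = ((1 - p i) ^ n * p i) * L (seq 0 M) (fun c => if Nat.eqb c i then 0 else p c)).
      { rewrite <- L_scal. apply L_ext_in; intros; lra. }
      change (L (seq 0 M) (fun c => (if Nat.eqb c i then 0 else p c) * ((1 - p i) ^ n * p i)) = (1 - p i) ^ S n * p i). rewrite E. clear E.
      assert (E2 : L (seq 0 M) (fun c => if Nat.eqb c i then 0 else p c) = 1 - p i).
      { rewrite <- hsum, sumM_L, <- (L_delta p M 0 i) by lia.
        rewrite (L_ext_in _ p (fun c => (if Nat.eqb c i then 0 else p c) + (if Nat.eqb c i then p c else 0))).
        - rewrite L_plus. lra.
        - intros c _. destruct (Nat.eqb c i); lra. }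
      rewrite E2. simpl. lra.
    + intros c _. rewrite <- L_scal. apply L_ext_in. intros w _.
      rewrite T_S. simpl word_prob. destruct (Nat.eqb c i); simpl; [lra|].
      destruct (T n i w); lra.
Qed.
End G.

Lemma PrA M p (hsum : sumM M p = 1) m i : (i < M)%nat ->
  Pr_cyl M p (S (S m)) (N_eq_cls (S m) i) = p i * ((1 - p i)^m * p i).
Proof.
  intros Hi. change (L (words M (S (S m))) (fun w => if N_eq_cls (S m) i (fun j => nth j w 0%nat)
      then word_prob p w else 0) = p i * ((1 - p i)^m * p i)).
  rewrite words_S, <- (G M p hsum m i Hi).
  rewrite <- (L_delta (fun c => p c * L (words M (S m)) (fun w => if T m c w then word_prob p w else 0)) M 0 i) by lia.
  apply L_ext_in; intros c _. destruct (Nat.eqb_spec c i).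
  - subst. rewrite <- L_scal. apply L_ext_in; intros w _.
    rewrite ev_cls, Nat.eqb_refl. simpl. destruct (T m i w); simpl; lra.
  - unfold L. induction (words M (S m)); cbn [map fold_right]; [lra|].
    rewrite ev_cls. rewrite IHl. replace (Nat.eqb c i) with false by (symmetry; now apply Nat.eqb_neq). simpl. lra.
Qed.

Lemma PrB M p (hsum : sumM M p = 1) m :
  Pr_cyl M p (S (S m)) (N_eq (S m)) = L (seq 0 M) (fun c => p c * ((1 - p c)^m * p c)).
Proof.
  change (L (words M (S (S m))) (fun w => if N_eq (S m) (fun j => nth j w 0%nat)
      then word_prob p w else 0) = L (seq 0 M) (fun c => p c * ((1 - p c)^m * p c))).
  rewrite words_S. apply L_ext_in; intros c Hc. apply in_seq in Hc.
  rewrite <- (G M p hsum m c) by lia. rewrite <- L_scal. apply L_ext_in; intros w _.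
  rewrite ev_N. simpl. destruct (T m c w); lra.
Qed.

Lemma harmonic_S n : harmonic (S n) = harmonic n + / INR (S n).
Proof.
  unfold harmonic. rewrite seq_S, fold_right_app. simpl.
  generalize (seq 1 n). intros l. induction l; simpl; [lra|]. rewrite IHl. lra.
Qed.

Lemma harmonic_0 : harmonic 0 = 0.
Proof. reflexivity. Qed.

Lemma harmonic_le n : 0 <= harmonic n <= INR n.
Proof.
  induction n; [rewrite harmonic_0; split; [lra|apply pos_INR]|]. rewrite harmonic_S.
  assert (1 <= INR (S n)) by (apply (le_INR 1); lia).
  assert (0 < / INR (S n) <= 1).
  { split; [apply Rinv_0_lt_compat; lra|]. rewrite <- Rinv_1. apply Rinv_le_contravar; lra. }
  rewrite S_INR in *. lra.
Qed.

Definition A q n := sum_f_R0 (fun m => q ^ S m / INR (S m)) n.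

Lemma partial q n : sum_f_R0 (fun m => harmonic m * ((1 - q) * q ^ m)) n
  = A q n - harmonic (S n) * q ^ S n.
Proof.
  unfold A; induction n.
  - simpl. rewrite harmonic_S, harmonic_0. simpl. field.
  - cbn [sum_f_R0]. rewrite IHn. rewrite (harmonic_S (S n)).
    cbn [pow]. field. apply not_0_INR. lia.
Qed.

Lemma derA n y : is_derive (fun y => A y n) y (sum_f_R0 (fun m => y ^ m) n).
Proof.
  unfold A. induction n.
  - simpl. eapply is_derive_ext. { intros t. reflexivity. }
    auto_derive; [auto|]. field.
  - cbn [sum_f_R0]. apply (is_derive_plus (fun y => sum_f_R0 (fun m => y ^ S m / INR (S m)) n)
       (fun y => y ^ S (S n) / INR (S (S n))) y); [exact IHn|].
    auto_derive; [auto|]. change (1 * (INR (S (S n)) * (y*y^n)) * / INR (S (S n)) = y ^ S n).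
    simpl pow. field. apply not_0_INR; lia.
Qed.

Lemma A0 n : A 0 n = 0.
Proof. unfold A; induction n; cbn [sum_f_R0]; [|rewrite IHn]; rewrite pow_i by lia; unfold Rdiv; ring. Qed.

Lemma derf n y : y < 1 -> is_derive (fun y => A y n + ln (1 - y)) y
   (sum_f_R0 (fun m => y ^ m) n - / (1 - y)).
Proof.
  intros Hy. apply (is_derive_plus (fun y => A y n) (fun y => ln (1 - y))); [apply derA|].
  auto_derive; [lra|]. field. lra.
Qed.

Lemma A_bound q n : 0 <= q < 1 -> Rabs (A q n + ln (1 - q)) <= q ^ S (S n) / (1 - q).
Proof.
  intros Hq.
  destruct (MVT_gen (fun y => A y n + ln (1 - y)) 0 q
     (fun y => sum_f_R0 (fun m => y ^ m) n - / (1 - y))) as [c [Hc E]].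
  - intros x Hx. rewrite Rmin_left, Rmax_right in Hx by lra. apply derf; lra.
  - intros x Hx. rewrite Rmin_left, Rmax_right in Hx by lra.
    apply continuity_pt_filterlim. apply (ex_derive_continuous (fun y => A y n + ln (1 - y))).
    eexists. apply derf. lra.
  - rewrite Rmin_left, Rmax_right in Hc by lra.
    rewrite A0, Rminus_0_r, ln_1, Rplus_0_r, Rminus_0_r in E. rewrite E.
    rewrite tech3 by lra.
    assert (E2 : ((1 - c ^ S n) / (1 - c) - / (1 - c)) = - (c ^ S n / (1 - c))) by (field; lra).
    rewrite E2, Rabs_mult, Rabs_Ropp, Rminus_0_r, (Rabs_right q) by lra.
    rewrite Rabs_right.
    2:{ apply Rle_ge, Rmult_le_pos; [apply pow_le; lra|apply Rlt_le, Rinv_0_lt_compat; lra]. }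
    assert (c ^ S n <= q ^ S n) by (apply pow_incr; lra).
    assert (/ (1 - c) <= / (1 - q)) by (apply Rinv_le_contravar; lra).
    assert (0 <= c ^ S n) by (apply pow_le; lra).
    unfold Rdiv. change (q ^ S (S n)) with (q * q ^ S n).
    assert (0 < / (1 - q)) by (apply Rinv_0_lt_compat; lra).
    assert (0 <= / (1 - c)) by (apply Rlt_le, Rinv_0_lt_compat; lra).
    assert (c ^ S n * / (1 - c) <= q ^ S n * / (1 - q)) by (apply Rmult_le_compat; lra).
    replace (q * q ^ S n * / (1 - q)) with ((q ^ S n * / (1 - q)) * q) by ring.
    apply Rmult_le_compat_r; lra.
Qed.

Lemma geom_SS q : 0 <= q < 1 -> is_lim_seq (fun n => q ^ S (S n)) 0.
Proof.
  intros Hq. apply (is_lim_seq_ext (fun n => (q * q) * q ^ n)).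
  { intros n. simpl. ring. }
  replace (Finite 0) with (Rbar_mult (q*q) 0) by (simpl; f_equal; ring).
  apply is_lim_seq_scal_l, is_lim_seq_geom. rewrite Rabs_right; lra.
Qed.

Lemma lim_A q : 0 <= q < 1 -> is_lim_seq (A q) (- ln (1 - q)).
Proof.
  intros Hq.
  apply (is_lim_seq_le_le (fun n => - ln (1 - q) - q ^ S (S n) / (1 - q)) _
                          (fun n => - ln (1 - q) + q ^ S (S n) / (1 - q))).
  - intros n. pose proof (A_bound q n Hq) as H. apply Rabs_le_between in H. lra.
  - pose proof (is_lim_seq_minus' _ _ _ _ (is_lim_seq_const (- ln (1-q)))
      (is_lim_seq_mult' _ _ _ _ (geom_SS q Hq) (is_lim_seq_const (/(1-q))))) as H.
    rewrite Rmult_0_l, Rminus_0_r in H. exact H.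
  - pose proof (is_lim_seq_plus' _ _ _ _ (is_lim_seq_const (- ln (1-q)))
      (is_lim_seq_mult' _ _ _ _ (geom_SS q Hq) (is_lim_seq_const (/(1-q))))) as H.
    rewrite Rmult_0_l, Rplus_0_r in H. exact H.
Qed.

Lemma nsn s n : 0 <= s <= 1 -> INR n * s ^ n * (1 - s) <= s.
Proof.
  intros Hs. induction n; [simpl; lra|].
  rewrite S_INR. cbn [pow].
  assert (s ^ n <= 1) by (apply pow_le_1 || (rewrite <- (pow1 n); apply pow_incr; lra)).
  assert (0 <= s ^ n) by (apply pow_le; lra).
  assert (0 <= INR n) by apply pos_INR.
  assert (s * (INR n * s ^ n * (1 - s)) <= s * s) by (apply Rmult_le_compat_l; lra).
  assert ((s * s ^ n) * (1 - s) <= s * (1 - s)).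
  { assert (s * s ^ n <= s * 1) by (apply Rmult_le_compat_l; lra).
    apply Rmult_le_compat_r; lra. }
  nra.
Qed.

Lemma lim_nq q : 0 <= q < 1 -> is_lim_seq (fun n => INR n * q ^ n) 0.
Proof.
  intros Hq. set (s := (1 + q) / 2).
  assert (Hs : 0 < s < 1) by (unfold s; lra).
  assert (Hqs : q <= s * s) by (unfold s; nra).
  apply (is_lim_seq_le_le (fun _ => 0) _ (fun n => s ^ n * / (1 - s))).
  - intros n. split.
    + apply Rmult_le_pos; [apply pos_INR|apply pow_le; lra].
    + assert (q ^ n <= s ^ n * s ^ n).
      { rewrite <- Rpow_mult_distr. apply pow_incr. lra. }
      pose proof (nsn s n ltac:(lra)).
      assert (INR n * s ^ n <= / (1 - s)).
      { apply (Rmult_le_reg_r (1 - s)); [lra|]. rewrite Rinv_l by lra. lra. }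
      assert (0 <= s ^ n) by (apply pow_le; lra).
      assert (0 <= INR n) by apply pos_INR.
      apply Rle_trans with (INR n * (s ^ n * s ^ n)); [apply Rmult_le_compat_l; lra|].
      replace (INR n * (s ^ n * s ^ n)) with ((INR n * s ^ n) * s ^ n) by ring.
      rewrite (Rmult_comm (s ^ n)). apply Rmult_le_compat_r; lra.
  - apply is_lim_seq_const.
  - pose proof (is_lim_seq_mult' _ _ _ _ (is_lim_seq_geom s ltac:(rewrite Rabs_right; lra))
      (is_lim_seq_const (/(1-s)))) as H. rewrite Rmult_0_l in H. exact H.
Qed.

Lemma core x : 0 < x <= 1 -> is_series (fun m => harmonic m * (x * (1 - x) ^ m)) (- ln x).
Proof.
  intros Hx. apply is_series_Reals. unfold infinite_sum.
  fold (Un_cv (sum_f_R0 (fun m => harmonic m * (x * (1 - x) ^ m))) (- ln x)).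
  apply is_lim_seq_Reals.
  set (q := 1 - x). assert (Hq : 0 <= q < 1) by (unfold q; lra).
  replace x with (1 - q) by (unfold q; ring).
  apply (is_lim_seq_ext (fun n => A q n - harmonic (S n) * q ^ S n)).
  { intros n. now rewrite partial. }
  replace (- ln (1 - q)) with (- ln (1 - q) - 0) by ring.
  apply is_lim_seq_minus'; [now apply lim_A|].
  apply (is_lim_seq_le_le (fun _ => 0) _ (fun n => INR (S n) * q ^ S n)).
  - intros n. pose proof (harmonic_le (S n)). assert (0 <= q ^ S n) by (apply pow_le; lra).
    split; [nra|]. apply Rmult_le_compat_r; lra.
  - apply is_lim_seq_const.
  - apply (is_lim_seq_incr_1 (fun n => INR n * q ^ n)). now apply lim_nq.
Qed.

Lemma is_series_zero : is_series (fun _ : nat => 0) 0.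
Proof.
  apply is_series_Reals. intros eps He. exists 0%nat. intros n _.
  rewrite sum_cte. unfold Rdist. rewrite Rmult_0_l, Rminus_0_r, Rabs_R0. lra.
Qed.

Lemma series_L (l : list nat) (f : nat -> nat -> R) g :
  (forall c, In c l -> is_series (f c) (g c)) ->
  is_series (fun m => L l (fun c => f c m)) (L l g).
Proof.
  induction l; intros H.
  - apply is_series_zero.
  - apply (is_series_plus (fun m => f a m) (fun m => L l (fun c => f c m))).
    + apply H; now left.
    + apply IHl. intros c Hc; apply H; now right.
Qed.

Theorem mainTheorem2 (M : nat) (p : nat -> R)
  (hp : forall i, (i < M)%nat -> 0 < p i <= 1)
  (hsum : sumM M p = 1) :
  (forall i, (i < M)%nat ->
     infinite_sum
       (fun m => harmonic m * Pr_cyl M p (S (S m)) (N_eq_cls (S m) i) / p i)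
       (- ln (p i)))
  /\
  infinite_sum
    (fun m => harmonic m * Pr_cyl M p (S (S m)) (N_eq (S m)))
    (- sumM M (fun i => p i * ln (p i))).
Proof.
  split.
  - intros i Hi. apply is_series_Reals.
    apply (is_series_ext (fun m => harmonic m * (p i * (1 - p i) ^ m))); [|now apply core, hp].
    intros m. rewrite (PrA M p hsum m i Hi). pose proof (hp i Hi).
    assert (E : harmonic m * (p i * (1 - p i) ^ m) =
      harmonic m * (p i * ((1 - p i) ^ m * p i)) / p i) by (field; lra). exact E.
  - apply is_series_Reals.
    assert (E : L (seq 0 M) (fun c => p c * - ln (p c)) = - sumM M (fun i => p i * ln (p i))).
    { rewrite sumM_L. replace (- L (seq 0 M) (fun i => p i * ln (p i)))
        with ((-1) * L (seq 0 M) (fun i => p i * ln (p i))) by ring.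
      rewrite <- L_scal. apply L_ext_in; intros; ring. }
    rewrite <- E.
    apply (is_series_ext (fun m => L (seq 0 M) (fun c => p c * (harmonic m * (p c * (1 - p c) ^ m))))).
    + intros m. rewrite (PrB M p hsum m), <- L_scal.
      assert (E2 : L (seq 0 M) (fun c => p c * (harmonic m * (p c * (1 - p c) ^ m))) =
        L (seq 0 M) (fun x => harmonic m * (p x * ((1 - p x) ^ m * p x)))) by (apply L_ext_in; intros; ring).
      exact E2.
    + apply (series_L (seq 0 M) (fun c m => p c * (harmonic m * (p c * (1 - p c) ^ m)))).
      intros c Hc. apply in_seq in Hc.
      apply (is_series_scal_l (p c) (fun m => harmonic m * (p c * (1 - p c) ^ m))).
      apply core, hp. lia.
Qed.
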